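(* There is $c>0$ independent of $h$ such that for all $u\in C^0(\bar I)$ and $v\in C^0(\bar I)^d$ with $|v(z)|=1$ for all $z\in\mathcal N_2(\mathcal T_h)$, $$\|\mathcal I_{h,2}(uv)\|_{L^1(I)^d}\le c\|\mathcal I_{h,2}u\|_{L^1(I)}.$$
   Context: Mesh notation: $I=(a,b)\subset\mathbb R$, $a=x_0<x_1<\dots<x_M=b$, $I_i=[x_{i-1},x_i]$, $h_i=x_i-x_{i-1}$, $h=\max_i h_i$, $\mathcal T_h=\{I_1,\dots,I_M\}$. Let $m_i=(x_{i-1}+x_i)/2$, $\mathcal N_1(\mathcal T_h)=\{x_0,\dots,x_M\}$, $\mathcal N_2(\mathcal T_h)=\mathcal N_1(\mathcal T_h)\cup\{m_1,\dots,m_M\}$. $\mathcal I_{h,2}$ is the continuous piecewise quadratic nodal interpolant defined by $\mathcal I_{h,2}v(z)=v(z)$ for $z\in\mathcal N_2(\mathcal T_h)$ (componentwise for vector-valued functions). *)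

(* Defs.v *)
From Stdlib Require Import Reals Lra.
From Coquelicot Require Import Coquelicot.
Open Scope R_scope.

Definition is_mesh (a b : R) (M : nat) (x : nat -> R) : Prop :=
  (1 <= M)%nat /\ x 0%nat = a /\ x M = b /\
  (forall i : nat, (1 <= i <= M)%nat -> x (i - 1)%nat < x i).

Definition midpt (x : nat -> R) (i : nat) : R := (x (i - 1)%nat + x i) / 2.

Definition in_N2 (M : nat) (x : nat -> R) (z : R) : Prop :=
  (exists i : nat, (i <= M)%nat /\ z = x i) \/
  (exists i : nat, (1 <= i <= M)%nat /\ z = midpt x i).

(* Quadratic Lagrange interpolant of g on element I_i = [x_{i-1}, x_i],
   through the nodes x_{i-1}, m_i, x_i. *)
Definition lagr2 (x : nat -> R) (g : R -> R) (i : nat) (t : R) : R :=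
  let p := x (i - 1)%nat in
  let q := x i in
  let m := midpt x i in
  g p * ((t - m) * (t - q)) / ((p - m) * (p - q)) +
  g m * ((t - p) * (t - q)) / ((m - p) * (m - q)) +
  g q * ((t - p) * (t - m)) / ((q - p) * (q - m)).

Fixpoint p2_loc (x : nat -> R) (g : R -> R) (i fuel : nat) (t : R) : R :=
  match fuel with
  | O => lagr2 x g i t
  | S f => if Rle_dec t (x i) then lagr2 x g i t else p2_loc x g (S i) f t
  end.

(* The continuous piecewise quadratic nodal interpolant I_{h,2} g
   (relevant on [a,b] = [x 0, x M]; at interior vertices both adjacent
   local interpolants agree, so the choice of element there is immaterial). *)
Definition interp2 (M : nat) (x : nat -> R) (g : R -> R) (t : R) : R :=
  p2_loc x g 1%nat (M - 1)%nat t.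

(* Vector-valued functions R -> R^d are represented as R -> (nat -> R);
   only components 0..d-1 are meaningful. Interpolation is componentwise. *)
Definition interp2_vec (M : nat) (x : nat -> R) (w : R -> nat -> R)
  (t : R) (k : nat) : R :=
  interp2 M x (fun s => w s k) t.

Fixpoint sumsq (d : nat) (y : nat -> R) : R :=
  match d with
  | O => 0
  | S n => sumsq n y + (y n) ^ 2
  end.

Definition enorm (d : nat) (y : nat -> R) : R := sqrt (sumsq d y).

Definition cont_on (a b : R) (f : R -> R) : Prop :=
  forall t, a <= t <= b -> forall eps, 0 < eps -> exists delta, 0 < delta /\
    forall s, a <= s <= b -> Rabs (s - t) < delta -> Rabs (f s - f t) < eps.

Definition L1 (a b : R) (f : R -> R) : R := RInt (fun t => Rabs (f t)) a b.
Definition L1vec (d : nat) (a b : R) (w : R -> nat -> R) : R :=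
  RInt (fun t => enorm d (w t)) a b.

(* Main.v *)
Require Import Defs.
From Stdlib Require Import Reals.
From Coquelicot Require Import Coquelicot.
From Stdlib Require Import Lra Psatz.
Open Scope R_scope.

Definition phi0 (s : R) := (2*s-1)*(s-1).
Definition phi1 (s : R) := 4*s*(1-s).
Definition phi2 (s : R) := s*(2*s-1).
Definition Qf (a0 a1 a2 s : R) := a0*phi0 s + a1*phi1 s + a2*phi2 s.

Lemma Qf_cont a0 a1 a2 s : continuous (Qf a0 a1 a2) s.
Proof. apply (@ex_derive_continuous R_AbsRing R_NormedModule). unfold Qf, phi0, phi1, phi2. auto_derive. easy. Qed.

Lemma dual_bound (f psi : R -> R) (c : R) :
  (forall s, continuous f s) -> (forall s, continuous psi s) ->
  (forall s, 0 <= s <= 1 -> Rabs (psi s) <= 10) ->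
  RInt (fun s => f s * psi s) 0 1 = c ->
  Rabs c <= 10 * RInt (fun s => Rabs (f s)) 0 1.
Proof.
  intros Hf Hp Hb Hc. subst c.
  assert (E1 : ex_RInt (fun s => f s * psi s) 0 1).
  { apply (@ex_RInt_continuous R_CompleteNormedModule); intros; apply (continuous_mult f psi); auto. }
  assert (E2 : ex_RInt (fun s => Rabs (f s)) 0 1).
  { apply (@ex_RInt_continuous R_CompleteNormedModule); intros; apply continuous_Rabs_comp; auto. }
  eapply Rle_trans. apply abs_RInt_le. lra. exact E1.
  replace (10 * RInt (fun s => Rabs (f s)) 0 1) with (RInt (fun s => scal 10 (Rabs (f s))) 0 1).
  2:{ rewrite (@RInt_scal R_CompleteNormedModule); auto. }
  apply RInt_le. lra.
  - apply (@ex_RInt_continuous R_CompleteNormedModule); intros; apply continuous_Rabs_comp; apply (continuous_mult f psi); auto.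
  - apply (@ex_RInt_scal R_NormedModule); auto.
  - intros s Hs. rewrite Rabs_mult. unfold scal; simpl; unfold mult; simpl.
    rewrite Rmult_comm. apply Rmult_le_compat_r. apply Rabs_pos. apply Hb; lra.
Qed.

Lemma poly_cont (f : R -> R) s : (forall s, ex_derive f s) -> continuous f s.
Proof. intros H; apply (@ex_derive_continuous R_AbsRing R_NormedModule); auto. Qed.

Definition psi0 (s:R) := 9 - 36*s + 30*s^2.
Definition psi1 (s:R) := -3/2 + 15*s - 15*s^2.
Definition psi2 (s:R) := 3 - 24*s + 30*s^2.

Lemma int_j (psi P : R -> R) (a0 a1 a2 c : R) :
  (forall s, is_derive P s (Qf a0 a1 a2 s * psi s)) ->
  (forall s, continuous psi s) ->
  P 1 - P 0 = c ->
  RInt (fun s => Qf a0 a1 a2 s * psi s) 0 1 = c.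
Proof.
  intros HD Hc HP. apply (@is_RInt_unique R_CompleteNormedModule).
  assert (E : minus (P 1) (P 0) = c) by (rewrite <- HP; reflexivity). rewrite <- E.
  apply (@is_RInt_derive R_CompleteNormedModule). intros; auto.
  intros; apply (continuous_mult (Qf a0 a1 a2) psi); auto using Qf_cont.
Qed.

Ltac RE := match goal with |- ?A = ?B => change (@eq R A B) end.

Lemma elem_lower a0 a1 a2 :
  Rabs a0 + Rabs a1 + Rabs a2 <= 30 * RInt (fun s => Rabs (Qf a0 a1 a2 s)) 0 1.
Proof.
  assert (C : forall psi : R -> R, (forall s, ex_derive psi s) -> forall s : R, continuous psi s).
  { intros; apply poly_cont; auto. }
  assert (H0 : Rabs a0 <= 10 * RInt (fun s => Rabs (Qf a0 a1 a2 s)) 0 1).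
  { apply (dual_bound _ psi0). apply Qf_cont. apply C; intros; unfold psi0; auto_derive; easy.
    intros s Hs; unfold psi0; apply Rabs_le; split; nra.
    apply (int_j psi0 (fun s => a0*(9*s - 63/2*s^2 + 52*s^3 - 81/2*s^4 + 12*s^5)
        + a1*(18*s^2 - 60*s^3 + 66*s^4 - 24*s^5) + a2*(-9/2*s^2 + 18*s^3 - 51/2*s^4 + 12*s^5))).
    intros s; auto_derive; [easy|]. unfold Qf, phi0, phi1, phi2, psi0. RE. field.
    apply C; intros; unfold psi0; auto_derive; easy. RE; field. }
  assert (H1 : Rabs a1 <= 10 * RInt (fun s => Rabs (Qf a0 a1 a2 s)) 0 1).
  { apply (dual_bound _ psi1). apply Qf_cont. apply C; intros; unfold psi1; auto_derive; easy.
    intros s Hs; unfold psi1; apply Rabs_le; split; nra.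
    apply (int_j psi1 (fun s => a0*(-3/2*s + 39/4*s^2 - 21*s^3 + 75/4*s^4 - 6*s^5)
        + a1*(-3*s^2 + 22*s^3 - 30*s^4 + 12*s^5) + a2*(3/4*s^2 - 6*s^3 + 45/4*s^4 - 6*s^5))).
    intros s; auto_derive; [easy|]. unfold Qf, phi0, phi1, phi2, psi1. RE. field.
    apply C; intros; unfold psi1; auto_derive; easy. RE; field. }
  assert (H2 : Rabs a2 <= 10 * RInt (fun s => Rabs (Qf a0 a1 a2 s)) 0 1).
  { apply (dual_bound _ psi2). apply Qf_cont. apply C; intros; unfold psi2; auto_derive; easy.
    intros s Hs; unfold psi2; apply Rabs_le; split; nra.
    apply (int_j psi2 (fun s => a0*(3*s - 33/2*s^2 + 36*s^3 - 69/2*s^4 + 12*s^5)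
        + a1*(6*s^2 - 36*s^3 + 54*s^4 - 24*s^5) + a2*(-3/2*s^2 + 10*s^3 - 39/2*s^4 + 12*s^5))).
    intros s; auto_derive; [easy|]. unfold Qf, phi0, phi1, phi2, psi2. RE. field.
    apply C; intros; unfold psi2; auto_derive; easy. RE; field. }
  lra.
Qed.

Lemma sumsq_nonneg d y : 0 <= sumsq d y.
Proof. induction d; simpl; nra. Qed.

Lemma sumsq3 d (c0 c1 c2 : R) (w0 w1 w2 : nat -> R) :
  sumsq d (fun k => c0 * w0 k + c1 * w1 k + c2 * w2 k)
  <= 3 * (c0^2 * sumsq d w0 + c1^2 * sumsq d w1 + c2^2 * sumsq d w2).
Proof.
  induction d; simpl. lra.
  assert (H : (c0 * w0 d + c1 * w1 d + c2 * w2 d)^2 <=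
     3 * (c0^2 * (w0 d)^2 + c1^2 * (w1 d)^2 + c2^2 * (w2 d)^2)).
  { set (X := c0 * w0 d); set (Y := c1 * w1 d); set (Z := c2 * w2 d).
    replace (c0^2 * (w0 d)^2) with (X^2) by (unfold X; ring).
    replace (c1^2 * (w1 d)^2) with (Y^2) by (unfold Y; ring).
    replace (c2^2 * (w2 d)^2) with (Z^2) by (unfold Z; ring).
    pose proof (pow2_ge_0 (X-Y)); pose proof (pow2_ge_0 (Y-Z)); pose proof (pow2_ge_0 (X-Z)). nra. }
  lra.
Qed.

Lemma enorm1 d w : enorm d w = 1 -> sumsq d w = 1.
Proof.
  unfold enorm; intros H. pose proof (sqrt_sqrt _ (sumsq_nonneg d w)). rewrite H in H0. lra.
Qed.

Lemma phi_bounds s : 0 <= s <= 1 -> Rabs (phi0 s) <= 1 /\ Rabs (phi1 s) <= 1 /\ Rabs (phi2 s) <= 1.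
Proof. intros Hs; unfold phi0, phi1, phi2; pose proof (pow2_ge_0 (2*s-1)); pose proof (pow2_ge_0 (4*s-3));
  pose proof (pow2_ge_0 (4*s-1));
  split; [|split]; apply Rabs_le; split; nra. Qed.

Lemma sq_le_abs a p : Rabs p <= 1 -> (a * p)^2 <= a^2.
Proof.
  intros H. assert (p^2 <= 1) by (unfold Rabs in H; destruct (Rcase_abs p); nra).
  rewrite Rpow_mult_distr. pose proof (pow2_ge_0 a). nra.
Qed.

Lemma sumsq_cont d (g : nat -> R -> R) (t : R) :
  (forall k, continuous (g k) t) -> continuous (fun s => sumsq d (fun k => g k s)) t.
Proof.
  intros Hg. induction d; simpl.
  - apply continuous_const.
  - apply (continuous_plus (fun s => sumsq d (fun k => g k s)) (fun s => g d s ^ 2)); auto.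
    apply (continuous_comp (g d) (fun y => y ^ 2)). auto.
    apply poly_cont. intros; auto_derive; easy.
Qed.

Definition Fv d a0 a1 a2 (w0 w1 w2 : nat -> R) (s : R) :=
  enorm d (fun k => (a0*phi0 s)*w0 k + (a1*phi1 s)*w1 k + (a2*phi2 s)*w2 k).

Lemma Fv_cont d a0 a1 a2 w0 w1 w2 t : continuous (Fv d a0 a1 a2 w0 w1 w2) t.
Proof.
  unfold Fv, enorm. apply continuous_sqrt_comp.
  apply (sumsq_cont d (fun k s => (a0*phi0 s)*w0 k + (a1*phi1 s)*w1 k + (a2*phi2 s)*w2 k)).
  intros k. apply poly_cont. intros; unfold phi0, phi1, phi2; auto_derive; easy.
Qed.

Lemma elem_upper d a0 a1 a2 w0 w1 w2 :
  sumsq d w0 = 1 -> sumsq d w1 = 1 -> sumsq d w2 = 1 ->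
  RInt (Fv d a0 a1 a2 w0 w1 w2) 0 1 <= 2 * (Rabs a0 + Rabs a1 + Rabs a2).
Proof.
  intros H0 H1 H2.
  apply Rle_trans with (RInt (fun _ => 2 * (Rabs a0 + Rabs a1 + Rabs a2)) 0 1).
  - apply RInt_le. lra.
    + apply (@ex_RInt_continuous R_CompleteNormedModule); intros; apply Fv_cont.
    + apply ex_RInt_const.
    + intros s Hs. destruct (phi_bounds s) as [B0 [B1 B2]]. lra.
      unfold Fv, enorm.
      pose proof (sumsq3 d (a0*phi0 s) (a1*phi1 s) (a2*phi2 s) w0 w1 w2) as S.
      rewrite H0, H1, H2 in S.
      pose proof (sq_le_abs a0 _ B0). pose proof (sq_le_abs a1 _ B1). pose proof (sq_le_abs a2 _ B2).
      set (T := Rabs a0 + Rabs a1 + Rabs a2).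
      assert (HT : 0 <= T) by (unfold T; pose proof (Rabs_pos a0); pose proof (Rabs_pos a1); pose proof (Rabs_pos a2); lra).
      rewrite <- (sqrt_square (2*T)) by lra.
      apply sqrt_le_1_alt.
      assert (a0^2 + a1^2 + a2^2 <= T*T).
      { unfold T. rewrite <- (pow2_abs a0), <- (pow2_abs a1), <- (pow2_abs a2).
        pose proof (Rabs_pos a0); pose proof (Rabs_pos a1); pose proof (Rabs_pos a2). nra. }
      nra.
  - rewrite RInt_const. unfold scal; simpl; unfold mult; simpl. lra.
Qed.

Lemma mesh_mono a b M x : is_mesh a b M x -> forall j k, (j <= k <= M)%nat -> x j <= x k.
Proof.
  intros [_ [_ [_ H]]] j k. induction k; intros Hk.
  - assert (j = 0%nat) by lia. subst; lra.
  - destruct (Nat.eq_dec j (S k)). subst; lra.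
    assert (x k <= x (S k)). { pose proof (H (S k) ltac:(lia)). replace (S k - 1)%nat with k in H0 by lia. lra. }
    pose proof (IHk ltac:(lia)). lra.
Qed.

Lemma p2_loc_elem a b M x g t i : is_mesh a b M x -> (1 <= i <= M)%nat ->
  x (i-1)%nat < t <= x i ->
  forall f j, (1 <= j)%nat -> (j + f = M)%nat -> (j <= i)%nat -> p2_loc x g j f t = lagr2 x g i t.
Proof.
  intros Hm Hi Ht f. induction f; intros j Hj Hjf Hji; simpl.
  - assert (i = j) by lia. subst; reflexivity.
  - destruct (Rle_dec t (x j)).
    + destruct (Nat.eq_dec i j). subst; reflexivity.
      pose proof (mesh_mono a b M x Hm j (i-1)%nat ltac:(lia)). lra.
    + apply IHf; try lia. destruct (Nat.eq_dec i j). subst; lra. lia.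
Qed.

Lemma interp_elem a b M x g t i : is_mesh a b M x -> (1 <= i <= M)%nat ->
  x (i-1)%nat < t <= x i -> interp2 M x g t = lagr2 x g i t.
Proof.
  intros Hm Hi Ht. unfold interp2. apply (p2_loc_elem a b M x g t i Hm Hi Ht); lia.
Qed.

Lemma lagr2_aff x g i s : x (i-1)%nat < x i ->
  lagr2 x g i ((x i - x (i-1)%nat)*s + x (i-1)%nat) =
  g (x (i-1)%nat) * phi0 s + g (midpt x i) * phi1 s + g (x i) * phi2 s.
Proof.
  intros H. unfold lagr2, midpt, phi0, phi1, phi2.
  set (p := x (i-1)%nat) in *. set (q := x i) in *.
  field. repeat split; lra.
Qed.

Lemma comp_lin (f : R -> R) p q : (forall t, continuous f t) -> p < q ->
  RInt f p q = (q - p) * RInt (fun s => f ((q-p)*s + p)) 0 1.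
Proof.
  intros Hf Hpq.
  assert (E : ex_RInt f ((q-p)*0+p) ((q-p)*1+p)).
  { apply (@ex_RInt_continuous R_CompleteNormedModule); intros; auto. }
  pose proof (@RInt_comp_lin R_CompleteNormedModule f (q-p) p 0 1 E) as H.
  replace ((q-p)*0+p) with p in H by ring. replace ((q-p)*1+p) with q in H by ring.
  rewrite <- H. rewrite (@RInt_scal R_CompleteNormedModule). reflexivity.
  apply (@ex_RInt_continuous R_CompleteNormedModule); intros.
  apply (continuous_comp (fun s => (q-p)*s+p) f). apply poly_cont; intros; auto_derive; easy. auto.
Qed.

From Stdlib Require Import FunctionalExtensionality.

Lemma lagr2_cont x g i t : continuous (lagr2 x g i) t.
Proof. apply poly_cont. intros; unfold lagr2; auto_derive; easy. Qed.

Lemma element d a b M x u v i : is_mesh a b M x -> (1 <= i <= M)%nat ->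
  (forall z : R, in_N2 M x z -> enorm d (v z) = 1) ->
  let F := fun t => enorm d (interp2_vec M x (fun s k => u s * v s k) t) in
  let G := fun t => Rabs (interp2 M x u t) in
  ex_RInt F (x (i-1)%nat) (x i) /\ ex_RInt G (x (i-1)%nat) (x i) /\
  RInt F (x (i-1)%nat) (x i) <= 60 * RInt G (x (i-1)%nat) (x i).
Proof.
  intros Hm Hi Hv F G.
  assert (Hpq : x (i-1)%nat < x i).
  { destruct Hm as [_ [_ [_ H]]]. apply H; lia. }
  set (p := x (i-1)%nat) in *. set (q := x i) in *.
  set (Fi := fun t => enorm d (fun k => lagr2 x (fun s => u s * v s k) i t)).
  set (Gi := fun t => Rabs (lagr2 x u i t)).
  assert (CF : forall t, continuous Fi t).
  { intros t. unfold Fi, enorm. apply continuous_sqrt_comp.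
    apply (sumsq_cont d (fun k t => lagr2 x (fun s => u s * v s k) i t)). intros; apply lagr2_cont. }
  assert (CG : forall t, continuous Gi t).
  { intros t. unfold Gi. apply continuous_Rabs_comp. apply lagr2_cont. }
  assert (EF : forall t, Rmin p q < t < Rmax p q -> Fi t = F t).
  { intros t Ht. rewrite Rmin_left, Rmax_right in Ht by lra. unfold Fi, F. f_equal.
    apply functional_extensionality; intro k. unfold interp2_vec.
    symmetry; apply (interp_elem a b M x _ t i Hm Hi); unfold p, q in *; lra. }
  assert (EG : forall t, Rmin p q < t < Rmax p q -> Gi t = G t).
  { intros t Ht. rewrite Rmin_left, Rmax_right in Ht by lra. unfold Gi, G. f_equal.
    symmetry; apply (interp_elem a b M x _ t i Hm Hi); unfold p, q in *; lra. }
  assert (XF : ex_RInt Fi p q) by (apply (@ex_RInt_continuous R_CompleteNormedModule); auto).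
  assert (XG : ex_RInt Gi p q) by (apply (@ex_RInt_continuous R_CompleteNormedModule); auto).
  split; [|split].
  - apply (ex_RInt_ext Fi); auto.
  - apply (ex_RInt_ext Gi); auto.
  - rewrite <- (RInt_ext Fi F p q EF), <- (RInt_ext Gi G p q EG).
    rewrite (comp_lin Fi p q CF Hpq), (comp_lin Gi p q CG Hpq).
    assert (N0 : in_N2 M x p) by (left; exists (i-1)%nat; split; [lia|reflexivity]).
    assert (N1 : in_N2 M x (midpt x i)) by (right; exists i; split; [lia|reflexivity]).
    assert (N2 : in_N2 M x q) by (left; exists i; split; [lia|reflexivity]).
    rewrite (RInt_ext (fun s => Fi ((q-p)*s+p)) (Fv d (u p) (u (midpt x i)) (u q) (v p) (v (midpt x i)) (v q))).
    rewrite (RInt_ext (fun s => Gi ((q-p)*s+p)) (fun s => Rabs (Qf (u p) (u (midpt x i)) (u q) s))).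
    + pose proof (elem_upper d (u p) (u (midpt x i)) (u q) (v p) (v (midpt x i)) (v q)
         (enorm1 _ _ (Hv _ N0)) (enorm1 _ _ (Hv _ N1)) (enorm1 _ _ (Hv _ N2))).
      pose proof (elem_lower (u p) (u (midpt x i)) (u q)).
      rewrite <- Rmult_assoc, (Rmult_comm 60), Rmult_assoc. apply Rmult_le_compat_l. lra. lra.
    + intros s _. unfold Gi, Qf. f_equal. unfold p, q. rewrite lagr2_aff; [reflexivity|exact Hpq].
    + intros s _. unfold Fi, Fv. f_equal. apply functional_extensionality; intro k.
      unfold p, q. rewrite lagr2_aff; [ring|exact Hpq].
Qed.

Theorem lemmaA3 :
  forall (d : nat) (a b : R), a < b ->
  exists c : R, 0 < c /\
    forall (M : nat) (x : nat -> R), is_mesh a b M x ->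
    forall (u : R -> R) (v : R -> nat -> R),
      cont_on a b u ->
      (forall k : nat, (k < d)%nat -> cont_on a b (fun s => v s k)) ->
      (forall z : R, in_N2 M x z -> enorm d (v z) = 1) ->
      L1vec d a b (interp2_vec M x (fun s k => u s * v s k))
        <= c * L1 a b (interp2 M x u).
Proof.
  intros d a b Hab. exists 60. split. lra.
  intros M x Hm u v _ _ Hv. unfold L1vec, L1.
  set (F := fun t => enorm d (interp2_vec M x (fun s k => u s * v s k) t)).
  set (G := fun t => Rabs (interp2 M x u t)).
  assert (Hx0 : x 0%nat = a) by apply Hm.
  assert (HxM : x M = b) by apply Hm.
  assert (IND : forall n, (n <= M)%nat -> ex_RInt F a (x n) /\ ex_RInt G a (x n) /\
     RInt F a (x n) <= 60 * RInt G a (x n)).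
  { induction n; intros Hn.
    - rewrite Hx0. split; [|split]. apply ex_RInt_point. apply ex_RInt_point.
      rewrite !RInt_point. unfold zero; simpl. lra.
    - destruct (IHn ltac:(lia)) as [A1 [A2 A3]].
      destruct (element d a b M x u v (S n) Hm ltac:(lia) Hv) as [B1 [B2 B3]].
      replace (S n - 1)%nat with n in * by lia. fold F G in B1, B2, B3.
      split; [|split].
      + apply (ex_RInt_Chasles F a (x n)); auto.
      + apply (ex_RInt_Chasles G a (x n)); auto.
      + rewrite <- (RInt_Chasles F a (x n) (x (S n))), <- (RInt_Chasles G a (x n) (x (S n))) by auto.
        unfold plus; simpl. lra. }
  destruct (IND M (le_n M)) as [_ [_ H]]. rewrite HxM in H. exact H.
Qed.
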